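(* Let $n$ be an odd positive integer and $k$ an integer with $1<k<n$ and $\gcd(n,k)=\gcd(n,k-1)=1$. Then there is exactly one quasigroup operation on $\{1,2,\dots,n\}$ that is idempotent and $k$-translatable with respect to the ordering $1,2,\dots,n$.
   Context: A groupoid on $\{1,\dots,n\}$ is $k$-translatable with respect to the ordering $1,\dots,n$ if $i\cdot j=(i-1)\cdot(j-k)$ for all $i\in\{2,\dots,n\}$, $j\in\{1,\dots,n\}$, where $j-k$ is taken modulo $n$ in $\{1,\dots,n\}$. Idempotent means $x\cdot x=x$ for all $x$. *)

(* Defs.v *)
From mathcomp Require Import all_boot.
Set Implicit Arguments. Unset Strict Implicit. Unset Printing Implicit Defensive.

(* Elements 1..n of the paper are represented by the ordinals 0..n-1 of 'I_n
   (paper element x  <->  ordinal x-1); the ordering 1,...,n becomes 0,...,n-1.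
   A binary operation (groupoid) on the set is a finite function. *)
Definition binop (n : nat) := {ffun 'I_n * 'I_n -> 'I_n}.

Definition opp {n} (f : binop n) (x y : 'I_n) : 'I_n := f (x, y).

Definition is_quasigroup n (f : binop n) : Prop :=
  (forall a : 'I_n, bijective (fun x => opp f a x)) /\
  (forall a : 'I_n, bijective (fun x => opp f x a)).

Definition idempotent_binop n (f : binop n) : Prop := forall x : 'I_n, opp f x x = x.

(* j - k taken modulo n (0-based representatives in 'I_n).  For paper elements
   J = j+1, the paper's (J - k) mod n in {1..n} equals ((j - k) mod n) + 1. *)
Definition subk n (k : nat) (j : 'I_n) : 'I_n := insubd j ((j + n - k %% n) %% n).
(* insubd j v = the ordinal with value v whenever v < n (always the case here,
   since j : 'I_n forces 0 < n); the default j is never used. *)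

(* k-translatable w.r.t. the natural ordering: for paper rows i in {2..n},
   i.e. 0-based rows i with 1 <= i, row i is row i-1 shifted:
   i * j = (i-1) * (j - k). *)
Definition k_translatable n (k : nat) (f : binop n) : Prop :=
  forall (i j : 'I_n), 0 < val i ->
    opp f i j = opp f (insubd i i.-1) (subk k j).

(* Main.v *)
Require Import Defs.
From mathcomp Require Import all_boot.
From mathcomp Require Import all_boot all_algebra.
From mathcomp Require Import zify ring.
Require Import Defs.
Import GRing.Theory.
Local Open Scope ring_scope.

Section S.
Variable m : nat.
Local Notation n := m.+2.
Local Notation Z := 'Z_n.

Lemma valZ1 : val (1 : Z) = 1%N.
Proof. by rewrite /= modn_small. Qed.

Lemma subkE k (j : Z) : subk k j = j - (k%:R : Z).
Proof.
apply: val_inj; rewrite /subk val_insubd ltn_pmod //=.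
rewrite Zp_nat /= !modnDmr. 
have h : (k %% n <= n)%N by apply/ltnW/ltn_pmod.
by rewrite addnBA. 
Qed.

Lemma valm1 (i : Z) : (0 < val i)%N -> val (i - 1) = (val i).-1.
Proof.
move=> hi; have := ltn_ord i; rewrite /= /Zp_trunc /= (@modn_small 1) // => hl.
rewrite modnDmr; move: hi hl; case: i => [[|x] hx] //= _ hl; rewrite subn1 /= addSnnS modnDr modn_small //; lia.
Qed.

Lemma predE (i : Z) : (0 < val i)%N -> insubd i (val i).-1 = i - 1.
Proof.
move=> hi; apply: val_inj; rewrite valm1 // val_insubd.
by case: i hi => [[|x] hx] //= _; rewrite (ltnW hx).
Qed.

Lemma shift (g : binop n) k : k_translatable k g ->
  forall (i j : Z), opp g i j = opp g 0 (j - i * k%:R).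
Proof.
move=> H.
suff: forall t (i : Z), val i = t -> forall j, opp g i j = opp g 0 (j - i * k%:R).
  by move=> h i j; apply: h.
elim=> [|t IH] i hi j.
  have -> : i = 0 by apply: val_inj; rewrite hi.
  by rewrite mul0r subr0.
rewrite H; last by rewrite hi.
rewrite predE ?hi // subkE (IH (i - 1)); last by rewrite valm1 hi.
congr opp; ring.
Qed.

Definition fop (k : nat) (u : Z) : binop n :=
  [ffun p : Z * Z => (p.2 - p.1 * k%:R) / u].

Lemma fopE k u (i j : Z) : opp (fop k u) i j = (j - i * k%:R) / u.
Proof. by rewrite /opp ffunE. Qed.

Local Close Scope ring_scope.
Lemma main k : (0 < k)%N -> coprime n k -> coprime n k.-1 ->
  exists f : binop n,
    (is_quasigroup f /\ idempotent_binop f /\ k_translatable k f) /\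
    (forall g : binop n,
        is_quasigroup g /\ idempotent_binop g /\ k_translatable k g -> g = f).
Proof.
Local Open Scope ring_scope.
move=> k0 ck ck1.
have uk : (k%:R : Z) \is a GRing.unit by rewrite unitZpE.
have u1 : ((k.-1)%:R : Z) \is a GRing.unit by rewrite unitZpE.
set u : Z := 1 - k%:R.
have eu : u = - (k.-1)%:R.
  rewrite /u -[in k%:R](prednK k0) -natr1; ring.
have uu : u \is a GRing.unit by rewrite eu unitrN.
have uv : u^-1 \is a GRing.unit by rewrite unitrV.
exists (fop k u); split.
  split; [split|split].
  - move=> a; apply: injF_bij => x y; rewrite !fopE.
    by move/(mulIr uv)/addIr.
  - move=> a; apply: injF_bij => x y; rewrite !fopE.
    by move/(mulIr uv)/addrI/oppr_inj/(mulIr uk).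
  - move=> x; rewrite fopE.
    have -> : x - x * k%:R = x * u by rewrite /u; ring.
    by rewrite mulrK.
  - move=> i j hi; rewrite predE // subkE !fopE; congr (_ / u); ring.
move=> g [_ [gi gt]].
have g0 : forall y : Z, opp g 0 y = y / u.
  move=> y; rewrite -{1}(mulrVK uu y).
  have := gi (y / u); rewrite (shift _ _ gt).
  by have -> : y / u - y / u * k%:R = y / u * u by rewrite /u; ring.
apply/ffunP => -[i j]; rewrite ffunE.
by have := shift _ _ gt i j; rewrite g0 /opp => ->.
Qed.
End S.


Local Close Scope ring_scope.
Theorem corollary8p10 (n k : nat) :
  odd n -> 1 < k < n -> coprime n k -> coprime n k.-1 ->
  exists f : binop n,
    (is_quasigroup f /\ idempotent_binop f /\ k_translatable k f) /\
    (forall g : binop n,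
        is_quasigroup g /\ idempotent_binop g /\ k_translatable k g -> g = f).
Proof.
case: n => [|[|m]] _ /andP[hk hn] //; first by case: k hk hn => [|[|]].
apply: main => //; lia.
Qed.
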